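(* A linear operator $\mathcal A$ on a semiunitary space $U$ is selfadjoint (i.e. $\langle\mathcal Au,v\rangle=\langle u,\mathcal Av\rangle$ for all $u,v\in U$) if and only if it is bounded and the induced operator $\mathcal A_1$ on the unitary space $U/U_0$ is selfadjoint. Likewise, $\mathcal A$ is metric (i.e. $\langle\mathcal Au,\mathcal Av\rangle=\langle u,v\rangle$ for all $u,v\in U$) if and only if it is bounded and $\mathcal A_1$ is metric.
   Context: A semiunitary space is a finite-dimensional complex vector space $U$ with a positive semidefinite Hermitian form $\langle\cdot,\cdot\rangle$; $\|u\|=\sqrt{\langle u,u\rangle}$; $U_0=\{u:\langle u,u\rangle=0\}$, and $U/U_0$ carries the inner product $\langle u+U_0,v+U_0\rangle=\langle u,v\rangle$. An operator is bounded if $\|\mathcal Au\|\le c\|u\|$ for some real $c>0$ and all $u$; then $U_0$ is invariant and $\mathcal A_1(u+U_0):=\mathcal Au+U_0$. *)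

(* Defs.v *)
From HB Require Import structures.
From mathcomp Require Import all_boot all_order all_algebra.
From mathcomp Require Import reals complex.
From Stdlib Require Import ClassicalEpsilon FunctionalExtensionality PropExtensionality.

Set Implicit Arguments.
Unset Strict Implicit.
Unset Printing Implicit Defensive.
Import Order.TTheory GRing.Theory Num.Theory.
Local Open Scope ring_scope.

Section Semiunitary.
Variables (R : realType) (U : vectType R[i]).

Definition psd_hermitian (f : U -> U -> R[i]) : Prop :=
  [/\ forall (a : R[i]) (u v w : U), f (a *: u + v) w = a * f u w + f v w,
      forall u v : U, f u v = (f v u)^*
    & forall u : U, 0 <= f u u].

Variable f : U -> U -> R[i].

Definition snorm (u : U) : R[i] := sqrtC (f u u).

Definition U0 (u : U) : Prop := f u u = 0.

Definition bounded (A : U -> U) : Prop :=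
  exists c : R, 0 < c /\ forall u, snorm (A u) <= (c%:C)%C * snorm u.

Definition selfadjoint (A : U -> U) : Prop :=
  forall u v, f (A u) v = f u (A v).

Definition metric (A : U -> U) : Prop :=
  forall u v, f (A u) (A v) = f u v.

Definition coset (u : U) : U -> Prop := fun x => exists w, U0 w /\ x = u + w.

(* The quotient U / U_0: the set of cosets u + U_0. *)
Definition quot : Type := {X : U -> Prop | exists u, X = coset u}.

Definition qclass (u : U) : quot := exist _ (coset u) (ex_intro _ u erefl).

Definition qrepr (X : quot) : U :=
  proj1_sig (constructive_indefinite_description _ (proj2_sig X)).

Definition qform (X Y : quot) : R[i] := f (qrepr X) (qrepr Y).

Definition induced (A : U -> U) (X : quot) : quot := qclass (A (qrepr X)).

Definition q_selfadjoint (B : quot -> quot) : Prop :=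
  forall X Y, qform (B X) Y = qform X (B Y).

Definition q_metric (B : quot -> quot) : Prop :=
  forall X Y, qform (B X) (B Y) = qform X Y.

End Semiunitary.

Arguments psd_hermitian {R U} f.
Arguments snorm {R U} f u.
Arguments U0 {R U} f u.
Arguments bounded {R U} f A.
Arguments selfadjoint {R U} f A.
Arguments metric {R U} f A.
Arguments coset {R U} f u _.
Arguments quot {R U} f.
Arguments qclass {R U} f u.
Arguments qrepr {R U} f X.
Arguments qform {R U} f X Y.
Arguments induced {R U} f A X.
Arguments q_selfadjoint {R U} f B.
Arguments q_metric {R U} f B.

(* Main.v *)
Require Import Defs.
From HB Require Import structures.
From mathcomp Require Import all_boot all_order all_algebra.
From mathcomp Require Import reals complex.
From mathcomp Require Import ring lra.
From Stdlib Require Import ClassicalEpsilon.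
Import Order.TTheory GRing.Theory Num.Theory.
Local Open Scope ring_scope.

Set Implicit Arguments.
Section Aux.
Variables (R : realType) (U : vectType R[i]) (f : U -> U -> R[i]).
Hypothesis hf : psd_hermitian f.

Lemma fL a u v w : f (a *: u + v) w = a * f u w + f v w.
Proof. by case: hf. Qed.
Lemma fH u v : f u v = (f v u)^*.
Proof. by case: hf. Qed.
Lemma fge0 u : 0 <= f u u.
Proof. by case: hf. Qed.

Lemma fDl u v w : f (u + v) w = f u w + f v w.
Proof. by have := fL 1 u v w; rewrite scale1r mul1r. Qed.
Lemma f0l w : f 0 w = 0.
Proof.
have := fDl 0 0 w; rewrite addr0 => /eqP; rewrite -subr_eq0 opprD addrA subrr sub0r oppr_eq0.
by move/eqP.
Qed.
Lemma fZl a u w : f (a *: u) w = a * f u w.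
Proof. by rewrite -(addr0 (a *: u)) fL f0l addr0. Qed.
Lemma fNl u w : f (- u) w = - f u w.
Proof. by rewrite -scaleN1r fZl mulN1r. Qed.
Lemma fDr u v w : f w (u + v) = f w u + f w v.
Proof. by rewrite fH fDl rmorphD /= -!fH. Qed.
Lemma fZr a u w : f w (a *: u) = a^* * f w u.
Proof. by rewrite fH fZl rmorphM /= -fH. Qed.
Lemma f0r w : f w 0 = 0.
Proof. by rewrite fH f0l conjC0. Qed.
Lemma fNr u w : f w (- u) = - f w u.
Proof. by rewrite -scaleN1r fZr rmorphN1 mulN1r. Qed.

Lemma U0_orth w y : f w w = 0 -> f w y = 0.
Proof.
move=> hw.
set a := f y w.
have key : forall t : R[i], 0 <= t -> 0 <= f y y - 2%:R * t * (a * a^*).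
  move=> t ht.
  have := fge0 (y + (- (t * a)) *: w).
  rewrite fDl !fDr !fZl !fZr hw.
  have -> : f w y = a^* by rewrite fH.
  rewrite rmorphN rmorphM /= conj_Creal ?ger0_real //.
  match goal with |- is_true (0 <= ?X) -> _ => have -> : X = f y y - 2%:R * t * (a * a^*) end.
    rewrite /a; ring.
  by [].
have ha : 0 <= a * a^* by apply: mul_conjC_ge0.
have hy := fge0 y.
have : a * a^* == 0.
  apply/negPn/negP => hn.
  have hp : 0 < a * a^* by rewrite lt_def hn ha.
  have := key ((f y y + 1) / (a * a^*)) (divr_ge0 (addr_ge0 hy ler01) ha).
  rewrite -mulrA divfK //.
  move=> hE.
  suff h : f y y - 2%:R * (f y y + 1) < 0 by move: hE; rewrite (lt_geF h).
  rewrite subr_lt0 mulr_natl mulr2n.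
  apply: (lt_le_trans (ltr_pwDr ltr01 (lexx (f y y)))).
  by rewrite addrC lerDl addr_ge0 // ler01.
rewrite mulf_eq0 conjC_eq0 orbb => /eqP a0.
by rewrite fH -/a a0 conjC0.
Qed.

Lemma U0_orth' w y : f w w = 0 -> f y w = 0.
Proof. by move=> hw; rewrite fH U0_orth // conjC0. Qed.

Lemma Q2 u v : f (u + v) (u + v) <= 2%:R * f u u + 2%:R * f v v.
Proof.
have h := fge0 (u - v).
have e : f (u + v) (u + v) + f (u - v) (u - v) = 2%:R * f u u + 2%:R * f v v.
  rewrite !fDl !fDr !fNl !fNr. ring.
rewrite -e lerDl //.
Qed.

Lemma QZ a u : f (a *: u) (a *: u) = a * a^* * f u u.
Proof. by rewrite fZl fZr mulrA. Qed.


Lemma span_orth x (s : seq U) : (forall y, y \in s -> f y x = 0) ->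
  forall v, v \in <<s>>%VS -> f v x = 0.
Proof.
move=> hs v hv; rewrite (@coord_span _ _ _ (in_tuple s) v hv).
apply: (big_ind (fun v => f v x = 0)); first exact: f0l.
  by move=> a b ha hb; rewrite fDl ha hb addr0.
move=> i _; rewrite fZl hs ?mulr0 //; apply: mem_nth; exact: ltn_ord.
Qed.

Variable P : U -> R[i].
Hypotheses (P0 : forall u, 0 <= P u)
  (PD : forall u v, P (u + v) <= 2%:R * P u + 2%:R * P v)
  (PZ : forall a u, P (a *: u) = a * a^* * P u)
  (PU0 : forall u, f u u = 0 -> P u = 0).

Lemma key n : forall s : seq U, size s = n ->
  exists C, 0 <= C /\ forall u, u \in <<s>>%VS -> P u <= C * f u u.
Proof.
elim: n => [|n IH] [|x s] //= => [_|[Sn]].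
  exists 0; split => // u; rewrite span_nil memv0 => /eqP ->.
  by rewrite PU0 ?f0l // mul0r.
have hxx := fge0 x.
case: (eqVneq (f x x) 0) => hx.
  have [C [C0 hC]] := IH s Sn.
  exists (4%:R * C); split; first by rewrite mulr_ge0 // ler0n.
  move=> u; rewrite span_cons => /memv_addP [z /vlineP [a ->] [v hv ->]].
  apply: (le_trans (PD _ _)).
  rewrite PZ (PU0 hx) mulr0 mulr0 add0r.
  have hQ : f v v <= 2%:R * f (a *: x + v) (a *: x + v).
    have := Q2 (a *: x + v) ((- a) *: x).
    by rewrite QZ hx mulr0 mulr0 addr0 scaleNr addrAC subrr add0r.
  apply: (le_trans (ler_wpM2l (ler0n _ 2) (hC v hv))).
  have -> : 4%:R * C * f (a *: x + v) (a *: x + v) =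
     2%:R * C * (2%:R * f (a *: x + v) (a *: x + v)) by ring.
  rewrite mulrA ler_wpM2l // mulr_ge0 // ler0n.
have hxp : 0 < f x x by rewrite lt_def hx hxx.
pose s2 := [seq y - (f y x / f x x) *: x | y <- s].
have := IH s2; rewrite size_map => /(_ Sn) [C [C0 hC]].
exists (2%:R * P x / f x x + 2%:R * C); split.
  by rewrite addr_ge0 // ?divr_ge0 // mulr_ge0 // ler0n.
move=> u hu.
have hsub : (<<x :: s>> <= <[x]> + <<s2>>)%VS.
  apply/span_subvP => y; rewrite inE => /orP [/eqP ->|hy].
    exact: (subvP (addvSl _ _) _ (memv_line x)).
  have -> : y = (f y x / f x x) *: x + (y - (f y x / f x x) *: x) by rewrite addrC subrK.
  apply: memv_add; first by rewrite memvZ // memv_line.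
  by apply: memv_span; apply: map_f.
have horth : forall v, v \in <<s2>>%VS -> f v x = 0.
  apply: span_orth => y /mapP [y0 _ ->].
  by rewrite fDl fNl fZl divfK // subrr.
move: (subvP hsub _ hu) => /memv_addP [z /vlineP [b ->] [v hv ->]].
have hvx := horth v hv.
have hxv : f x v = 0 by rewrite fH hvx conjC0.
have hQ : f (b *: x + v) (b *: x + v) = b * b^* * f x x + f v v.
  by rewrite !fDl !fDr !fZl !fZr hvx hxv; ring.
rewrite hQ.
apply: (le_trans (PD _ _)); rewrite PZ.
apply: (@le_trans _ _ (2%:R * (b * b^* * P x) + 2%:R * (C * f v v))).
  by rewrite lerD // ler_wpM2l // hC.
rewrite -subr_ge0.
have -> : (2%:R * P x / f x x + 2%:R * C) * (b * b^* * f x x + f v v) -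
    (2%:R * (b * b^* * P x) + 2%:R * (C * f v v)) =
    2%:R * P x / f x x * f v v + 2%:R * C * (b * b^* * f x x).
  by field; rewrite hx.
have hbb := mul_conjC_ge0 b.
have hPx := P0 x.
apply: addr_ge0; [apply: mulr_ge0; [apply: divr_ge0; [apply: mulr_ge0; [exact: ler0n|exact: hPx]|exact: hxx]|exact: fge0] | apply: mulr_ge0; [apply: mulr_ge0; [exact: ler0n|exact: C0]|apply: mulr_ge0; [exact: hbb|exact: hxx]]].
Qed.

End Aux.

Lemma qreprP (R : realType) (U : vectType R[i]) (f : U -> U -> R[i])
  (hf : psd_hermitian f) (u : U) :
  exists w, f w w = 0 /\ qrepr f (qclass f u) = u - w.
Proof.
rewrite /qrepr.
case: (constructive_indefinite_description _ _) => r /= hr.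
have : coset f u u by exists 0; split; [by rewrite /U0 (f0l hf)| by rewrite addr0].
rewrite hr => -[w [hw ->]].
by exists w; split => //; rewrite addrK.
Qed.

Lemma redl (R : realType) (U : vectType R[i]) (f : U -> U -> R[i])
  (hf : psd_hermitian f) z w y : f w w = 0 -> f (z - w) y = f z y.
Proof. by move=> hw; rewrite (fDl hf) (fNl hf) (U0_orth hf _ y hw) subr0. Qed.

Lemma redr (R : realType) (U : vectType R[i]) (f : U -> U -> R[i])
  (hf : psd_hermitian f) z w y : f w w = 0 -> f y (z - w) = f y z.
Proof. by move=> hw; rewrite (fDr hf) (fNr hf) (U0_orth' hf _ y hw) subr0. Qed.

Lemma bounded_U0 (R : realType) (U : vectType R[i]) (f : U -> U -> R[i])
  (hf : psd_hermitian f) (A : {linear U -> U}) :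
  bounded f A -> forall w, f w w = 0 -> f (A w) (A w) = 0.
Proof.
move=> [c [c0 hc]] w hw.
have := hc w; rewrite /snorm hw sqrtC0 mulr0 => h.
have h0 : 0 <= sqrtC (f (A w) (A w)) by rewrite sqrtC_ge0 (fge0 hf).
have : sqrtC (f (A w) (A w)) == 0 by rewrite eq_le h h0.
by rewrite sqrtC_eq0 => /eqP.
Qed.

Unset Implicit Arguments.
Theorem lemma2p4 (R : realType) (U : vectType R[i]) (f : U -> U -> R[i])
  (hf : psd_hermitian f) (A : {linear U -> U}) :
  (selfadjoint f A <-> bounded f A /\ q_selfadjoint f (induced f A)) /\
  (metric f A <-> bounded f A /\ q_metric f (induced f A)).
Proof.
split; split.
- move=> hsa; split.
    pose P u := f (A u) (A u).
    have P0 : forall u, 0 <= P u by move=> u; exact: (fge0 hf).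
    have PD : forall u v, P (u + v) <= 2%:R * P u + 2%:R * P v.
      by move=> u v; rewrite /P linearD; exact: (Q2 hf).
    have PZ : forall a u, P (a *: u) = a * a^* * P u.
      by move=> a u; rewrite /P linearZ; exact: (QZ hf).
    have PU0 : forall u, f u u = 0 -> P u = 0.
      by move=> u hu; rewrite /P hsa (U0_orth hf _ _ hu).
    have [C [C0 hC]] := key hf P P0 PD PZ PU0 (vbasis (fullv : {vspace U})) (erefl (size (vbasis (fullv : {vspace U})))).
    have hRe : 0 <= complex.Re C by move: C0; rewrite lecE => /andP [_].
    have eC : ((complex.Re C)%:C)%C = C by rewrite RRe_real // ger0_real.
    exists (complex.Re C + 1); split; first by apply: ltr_wpDl.
    move=> u; rewrite /snorm.
    have hc : 0 <= ((complex.Re C + 1)%:C)%C by rewrite ler0c; apply: addr_ge0.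
    rewrite -{1}(sqrCK hc) -sqrtCM ?nnegrE ?exprn_ge0 ?(fge0 hf) //.
    rewrite ler_sqrtC ?nnegrE ?(fge0 hf) ?mulr_ge0 ?exprn_ge0 ?(fge0 hf) //.
    apply: (le_trans (hC u _)).
      by rewrite (span_basis (vbasisP fullv)) memvf.
    apply: ler_wpM2r; first exact: (fge0 hf).
    rewrite -eC -rmorphXn lecR.
    nra.
  move=> X Y; rewrite /qform /induced.
  have [w1 [hw1 ->]] := qreprP hf (A (qrepr f X)).
  have [w2 [hw2 ->]] := qreprP hf (A (qrepr f Y)).
  by rewrite (redl hf _ _ _ hw1) (redr hf _ _ _ hw2).
- move=> [hb hq] u v.
  have := hq (qclass f u) (qclass f v); rewrite /qform /induced.
  have [w1 [hw1 ->]] := qreprP hf u.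
  have [w2 [hw2 ->]] := qreprP hf v.
  have [w3 [hw3 ->]] := qreprP hf (A (u - w1)).
  have [w4 [hw4 ->]] := qreprP hf (A (v - w2)).
  rewrite (redl hf _ _ _ hw3) (redr hf _ _ _ hw4) !linearB.
  rewrite (redl hf _ _ _ (bounded_U0 hf A hb _ hw1)) (redr hf _ _ _ (bounded_U0 hf A hb _ hw2)).
  by rewrite (redl hf _ _ _ hw1) (redr hf _ _ _ hw2).
- move=> hm; split.
    exists 1; split; first exact: ltr01.
    by move=> u; rewrite /snorm hm mul1r.
  move=> X Y; rewrite /qform /induced.
  have [w1 [hw1 ->]] := qreprP hf (A (qrepr f X)).
  have [w2 [hw2 ->]] := qreprP hf (A (qrepr f Y)).
  by rewrite (redl hf _ _ _ hw1) (redr hf _ _ _ hw2).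
- move=> [hb hq] u v.
  have := hq (qclass f u) (qclass f v); rewrite /qform /induced.
  have [w1 [hw1 ->]] := qreprP hf u.
  have [w2 [hw2 ->]] := qreprP hf v.
  have [w3 [hw3 ->]] := qreprP hf (A (u - w1)).
  have [w4 [hw4 ->]] := qreprP hf (A (v - w2)).
  rewrite (redl hf _ _ _ hw3) (redr hf _ _ _ hw4) !linearB.
  rewrite (redl hf _ _ _ (bounded_U0 hf A hb _ hw1)) (redr hf _ _ _ (bounded_U0 hf A hb _ hw2)).
  by rewrite (redl hf _ _ _ hw1) (redr hf _ _ _ hw2).
Qed.
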